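(* Let $\mathcal{Q}$ be a parabolic subset of $\mathcal{R}$, $\mathrm{s}$ an involution of $\mathcal{R}$, and $C$ a $V$-fit Weyl chamber for $(\mathcal{Q},\mathrm{s})$. Set $\Phi_C=\mathcal{B}(C)\cap\mathcal{Q}^n$ and $\Phi_C^{\mathrm{s},+}=\{\alpha\in\Phi_C\mid\mathrm{s}(\alpha)\in\mathcal{R}^+(C)\}$. Then $\mathcal{Q}_{\Phi_C^{\mathrm{s},+}}$ is the largest closed subset of $\mathcal{R}$ which contains $\mathcal{Q}$ and is contained in $\mathcal{Q}\cup\mathrm{s}(\mathcal{Q})$. Moreover the following are equivalent: (a) $(\mathcal{Q},\mathrm{s})$ is Levi-nondegenerate; (b) $\mathrm{s}(\Phi_C)\subseteq\mathcal{R}^+(C)$; (c) $\mathrm{s}(\Phi_C)\subseteq\mathcal{Q}^n$.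
   Context: $\mathcal{R}$ is a reduced root system in a Euclidean space $V$. Closed subset: $\alpha,\beta\in\mathcal{Q}$, $\alpha+\beta\in\mathcal{R}\Rightarrow\alpha+\beta\in\mathcal{Q}$; parabolic: closed with $\mathcal{Q}\cup(-\mathcal{Q})=\mathcal{R}$. $\mathcal{Q}^r=\{\alpha\in\mathcal{Q}\mid-\alpha\in\mathcal{Q}\}$, $\mathcal{Q}^n=\{\alpha\in\mathcal{Q}\mid-\alpha\notin\mathcal{Q}\}$. For a Weyl chamber $C$: $\mathcal{R}^\pm(C)$ positive/negative roots, $\mathcal{B}(C)$ simple roots, $\mathrm{supp}_C(\alpha)$ the set of simple roots with nonzero coefficient in $\alpha$. $C$ is admissible for $\mathcal{Q}$ if $\mathcal{R}^+(C)\subseteq\mathcal{Q}$. For $\Phi\subseteq\mathcal{B}(C)$, $\mathcal{Q}_\Phi=\mathcal{R}^+(C)\cup\{\alpha\in\mathcal{R}^-(C)\mid\mathrm{supp}_C(\alpha)\cap\Phi=\emptyset\}$. An involution of $\mathcal{R}$ is a linear isometric involution $\mathrm{s}$ of $V$ with $\mathrm{s}(\mathcal{R})=\mathcal{R}$; a root $\alpha$ is real if $\mathrm{s}(\alpha)=\alpha$, imaginary if $\mathrm{s}(\alpha)=-\alpha$, complex otherwise. An admissible chamber $C$ is $V$-fit for $(\mathcal{Q},\mathrm{s})$ if $\mathrm{s}(\alpha)\in\mathcal{R}^-(C)$ for every complex $\alpha\in\mathcal{B}(C)\setminus\Phi_C$. The pair $(\mathcal{Q},\mathrm{s})$ is Levi-nondegenerate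 if there is no parabolic $\mathcal{Q}'$ with $\mathcal{Q}\subsetneq\mathcal{Q}'\subseteq\mathcal{Q}\cup\mathrm{s}(\mathcal{Q})$. *)

(* Defs.v *)
From HB Require Import structures.
From mathcomp Require Import all_boot all_order all_algebra.
Set Implicit Arguments. Unset Strict Implicit. Unset Printing Implicit Defensive.
Import Order.TTheory GRing.Theory Num.Theory.
Local Open Scope ring_scope.

Section RootSystems.
Variables (R : realFieldType) (n : nat).
Notation V := 'rV[R]_n.

Definition dot (u v : V) : R := (u *m v^T) 0 0.

Definition refl (a x : V) : V := x - ((2 * dot x a) / dot a a) *: a.

Definition reduced_root_system (Rs : seq V) : Prop :=
  uniq Rs /\ 0 \notin Rs /\
  [/\ (forall v : V, exists k : V -> R, v = \sum_(a <- Rs) k a *: a),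
      (forall a b, a \in Rs -> b \in Rs -> refl a b \in Rs),
      (forall a b, a \in Rs -> b \in Rs ->
          exists z : int, (2 * dot b a) / dot a a = z%:~R) &
      (forall a (c : R), a \in Rs -> c *: a \in Rs -> c = 1 \/ c = -1)].

Definition subsetV (A B : V -> Prop) := forall x, A x -> B x.

(* Weyl chamber: a connected component of V minus the root hyperplanes, i.e.
   the set of vectors having the same (nonzero) signs on all roots as some
   regular vector c. *)
Definition weyl_chamber (Rs : seq V) (C : V -> Prop) : Prop :=
  exists c : V, (forall a, a \in Rs -> dot a c != 0) /\
    forall x, C x <-> (forall a, a \in Rs -> dot a x != 0 /\
                                     ((0 < dot a x) = (0 < dot a c))).

Definition pos_roots (Rs : seq V) (C : V -> Prop) (a : V) : Prop :=
  a \in Rs /\ forall x, C x -> 0 < dot a x.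
Definition neg_roots (Rs : seq V) (C : V -> Prop) (a : V) : Prop :=
  a \in Rs /\ forall x, C x -> dot a x < 0.

Definition simple_roots (Rs : seq V) (C : V -> Prop) (a : V) : Prop :=
  pos_roots Rs C a /\
  ~ (exists b c, pos_roots Rs C b /\ pos_roots Rs C c /\ a = b + c).

Definition supp (Rs : seq V) (C : V -> Prop) (a b : V) : Prop :=
  simple_roots Rs C b /\
  exists k : V -> R,
    (forall g, ~ simple_roots Rs C g -> k g = 0) /\
    a = \sum_(g <- Rs) k g *: g /\ k b != 0.

Definition closed_subset (Rs : seq V) (Q : V -> Prop) : Prop :=
  (forall a, Q a -> a \in Rs) /\
  (forall a b, Q a -> Q b -> a + b \in Rs -> Q (a + b)).

Definition parabolic (Rs : seq V) (Q : V -> Prop) : Prop :=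
  closed_subset Rs Q /\ (forall a, a \in Rs -> Q a \/ Q (- a)).

Definition Qr (Q : V -> Prop) (a : V) : Prop := Q a /\ Q (- a).
Definition Qn (Q : V -> Prop) (a : V) : Prop := Q a /\ ~ Q (- a).

Definition admissible (Rs : seq V) (Q : V -> Prop) (C : V -> Prop) : Prop :=
  subsetV (pos_roots Rs C) Q.

Definition QPhi (Rs : seq V) (C : V -> Prop) (Phi : V -> Prop) (a : V) : Prop :=
  pos_roots Rs C a \/
  (neg_roots Rs C a /\ forall b, supp Rs C a b -> ~ Phi b).

Definition act (S : 'M[R]_n) (x : V) : V := x *m S.

Definition root_involution (Rs : seq V) (S : 'M[R]_n) : Prop :=
  [/\ S *m S = 1%:M,
      (forall x y : V, dot (act S x) (act S y) = dot x y),
      (forall a, a \in Rs -> act S a \in Rs) &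
      (forall b, b \in Rs -> exists2 a, a \in Rs & b = act S a)].

Definition complex_root (Rs : seq V) (S : 'M[R]_n) (a : V) : Prop :=
  a \in Rs /\ act S a <> a /\ act S a <> - a.

Definition PhiC (Rs : seq V) (Q : V -> Prop) (C : V -> Prop) (a : V) : Prop :=
  simple_roots Rs C a /\ Qn Q a.

Definition V_fit (Rs : seq V) (Q : V -> Prop) (S : 'M[R]_n) (C : V -> Prop) : Prop :=
  admissible Rs Q C /\
  forall a, simple_roots Rs C a -> ~ PhiC Rs Q C a -> complex_root Rs S a ->
    neg_roots Rs C (act S a).

Definition img (S : 'M[R]_n) (Q : V -> Prop) (b : V) : Prop :=
  exists a, Q a /\ b = act S a.

Definition levi_nondegenerate (Rs : seq V) (Q : V -> Prop) (S : 'M[R]_n) : Prop :=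
  ~ exists Q' : V -> Prop,
      [/\ parabolic Rs Q', subsetV Q Q', (exists a, Q' a /\ ~ Q a) &
          subsetV Q' (fun a => Q a \/ img S Q a)].

End RootSystems.

(* Main.v *)
Require Import Defs.
From mathcomp Require Import all_boot all_order all_algebra.
From mathcomp Require Import ring lra zify.
From Stdlib Require Import Classical ClassicalEpsilon.
Set Implicit Arguments. Unset Strict Implicit. Unset Printing Implicit Defensive.
Import Order.TTheory GRing.Theory Num.Theory.
Local Open Scope ring_scope.

Section Dot.
Variables (R : realFieldType) (n : nat).
Notation V := 'rV[R]_n.
Implicit Types u v w : V.

Lemma dotE u v : dot u v = \sum_(i < n) u 0 i * v 0 i.
Proof. by rewrite /dot mxE; apply: eq_bigr => i _; rewrite mxE. Qed.

Lemma dotC u v : dot u v = dot v u.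
Proof. by rewrite !dotE; apply: eq_bigr => i _; rewrite mulrC. Qed.

Lemma dotDl u v w : dot (u + v) w = dot u w + dot v w.
Proof. by rewrite !dotE -big_split; apply: eq_bigr => i _; rewrite mxE mulrDl. Qed.

Lemma dotZl k u w : dot (k *: u) w = k * dot u w.
Proof. by rewrite !dotE mulr_sumr; apply: eq_bigr => i _; rewrite mxE mulrA. Qed.

Lemma dotNl u w : dot (- u) w = - dot u w.
Proof. by rewrite -scaleN1r dotZl mulN1r. Qed.

Lemma dotBl u v w : dot (u - v) w = dot u w - dot v w.
Proof. by rewrite dotDl dotNl. Qed.

Lemma dotDr u v w : dot w (u + v) = dot w u + dot w v.
Proof. by rewrite dotC dotDl !(dotC w). Qed.
Lemma dotZr k u w : dot w (k *: u) = k * dot w u.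
Proof. by rewrite dotC dotZl dotC. Qed.
Lemma dotNr u w : dot w (- u) = - dot w u.
Proof. by rewrite dotC dotNl dotC. Qed.
Lemma dotBr u v w : dot w (u - v) = dot w u - dot w v.
Proof. by rewrite dotDr dotNr. Qed.

Lemma dot0l w : dot 0 w = 0.
Proof. by rewrite -(scale0r 0) dotZl mul0r. Qed.
Lemma dot0r w : dot w 0 = 0.
Proof. by rewrite dotC dot0l. Qed.

Lemma dot_suml I (s : seq I) (P : pred I) (F : I -> V) w :
  dot (\sum_(i <- s | P i) F i) w = \sum_(i <- s | P i) dot (F i) w.
Proof.
elim: s => [|x s IH]; first by rewrite !big_nil dot0l.
by rewrite !big_cons; case: (P x); rewrite ?dotDl IH.
Qed.
Lemma dot_sumr I (s : seq I) (P : pred I) (F : I -> V) w :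
  dot w (\sum_(i <- s | P i) F i) = \sum_(i <- s | P i) dot w (F i).
Proof. by rewrite dotC dot_suml; apply: eq_bigr => i _; rewrite dotC. Qed.

Lemma dot_ge0 u : 0 <= dot u u.
Proof. by rewrite dotE; apply: sumr_ge0 => i _; rewrite -expr2 sqr_ge0. Qed.

Lemma dot_eq0 u : (dot u u == 0) = (u == 0).
Proof.
apply/idP/idP; last by move/eqP->; rewrite dot0l.
rewrite dotE psumr_eq0 => [H|i _]; last by rewrite -expr2 sqr_ge0.
apply/eqP/rowP => i; rewrite mxE.
have := allP H i (mem_index_enum _); rewrite /= mulf_eq0 orbb.
by move/eqP.
Qed.
End Dot.


Section Roots.
Variables (R : realFieldType) (n : nat).
Notation V := 'rV[R]_n.
Variables (Rs : seq V) (c : V).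
Hypothesis HRs : reduced_root_system Rs.
Hypothesis Hc : forall a, a \in Rs -> dot a c != 0.

Lemma root_neq0 a : a \in Rs -> a != 0.
Proof. by case: HRs => _ [H0 _] Ha; apply: contraNneq H0 => <-. Qed.

Lemma dot_root_gt0 a : a \in Rs -> 0 < dot a a.
Proof. by move=> Ha; rewrite lt_def dot_eq0 root_neq0 // dot_ge0. Qed.

Lemma root_opp a : a \in Rs -> - a \in Rs.
Proof.
case: HRs => _ [_ [_ Hrefl _ _]] Ha.
have := Hrefl a a Ha Ha; rewrite /refl mulfK.
  by rewrite scaler_nat mulr2n opprD addrA subrr sub0r.
by rewrite gt_eqF // dot_root_gt0.
Qed.

Lemma root_sub a b : a \in Rs -> b \in Rs -> 0 < dot a b -> a != b -> a - b \in Rs.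
Proof.
move=> Ha Hb Hab Hne.
case: HRs => _ [_ [_ Hrefl Hint _]].
have HA := dot_root_gt0 Ha; have HB := dot_root_gt0 Hb.
have [z1 Hz1] := Hint b a Hb Ha.
have [z2 Hz2] := Hint a b Ha Hb.
have Hba : dot b a = dot a b by rewrite dotC.
have z1p : (0 : R) < z1%:~R.
  by rewrite -Hz1 divr_gt0 // mulr_gt0.
have z2p : (0 : R) < z2%:~R.
  by rewrite -Hz2 divr_gt0 // Hba mulr_gt0.
have [z1e|z1n] := eqVneq z1 1.
  by have := Hrefl b a Hb Ha; rewrite /refl Hz1 z1e scale1r.
have [z2e|z2n] := eqVneq z2 1.
  have := Hrefl a b Ha Hb; rewrite /refl Hz2 z2e scale1r => /root_opp.
  by rewrite opprB.
exfalso.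
have z1g : (2 : R) <= z1%:~R.
  have : (2 <= z1)%R by rewrite ltr0z in z1p; lia.
  by rewrite -(ler_int R).
have z2g : (2 : R) <= z2%:~R.
  have : (2 <= z2)%R by rewrite ltr0z in z2p; lia.
  by rewrite -(ler_int R).
have D1 : dot b b <= dot a b.
  by move: z1g; rewrite -Hz1 ler_pdivlMr // ; lra.
have D2 : dot a a <= dot a b.
  by move: z2g; rewrite -Hz2 ler_pdivlMr // Hba; lra.
have : dot (a - b) (a - b) <= 0.
  by rewrite !dotBl !dotBr Hba; lra.
move=> H; have : dot (a - b) (a - b) == 0 by rewrite eq_le H dot_ge0.
by rewrite dot_eq0 subr_eq0 (negbTE Hne).
Qed.
End Roots.


Section Sums.
Variables (R : realFieldType) (I : eqType).
Lemma sum_pos_ex (r : seq I) (F : I -> R) :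
  0 < \sum_(i <- r) F i -> exists i, i \in r /\ 0 < F i.
Proof.
move=> H; apply: NNPP => Hn; move: H; rewrite big_seq ltNge sumr_le0 //.
move=> i Hi; rewrite leNgt; apply/negP => Hp; apply: Hn; by exists i.
Qed.
Lemma sum_ge0_seq (r : seq I) (F : I -> R) :
  (forall i, i \in r -> 0 <= F i) -> 0 <= \sum_(i <- r) F i.
Proof. by move=> H; rewrite big_seq sumr_ge0. Qed.
Lemma sum_le0_seq (r : seq I) (F : I -> R) :
  (forall i, i \in r -> F i <= 0) -> \sum_(i <- r) F i <= 0.
Proof. by move=> H; rewrite big_seq sumr_le0. Qed.
Lemma sum_eq0_seq (r : seq I) (F : I -> R) :
  (forall i, i \in r -> 0 <= F i) -> \sum_(i <- r) F i = 0 ->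
  forall i, i \in r -> F i = 0.
Proof.
move=> H /eqP; rewrite big_seq psumr_eq0 // => /allP Ha i Hi.
by apply/eqP; have := Ha i Hi; rewrite Hi.
Qed.
End Sums.

Lemma count_lt (T : eqType) (s : seq T) (p q : pred T) x :
  subpred p q -> x \in s -> q x -> ~~ p x -> (count p s < count q s)%N.
Proof.
move=> Hpq; elim: s => [//|y s IH]; rewrite in_cons => /orP[/eqP<-|Hx] Hq Hp /=.
  by rewrite Hq (negbTE Hp) add0n add1n ltnS sub_count.
have := IH Hx Hq Hp; case: (p y) (Hpq y) => /=; last by lia.
by move=> ->; lia.
Qed.

Section Roots2.
Variables (R : realFieldType) (n : nat).
Notation V := 'rV[R]_n.
Variables (Rs : seq V) (c : V).
Hypothesis HRs : reduced_root_system Rs.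
Hypothesis Hc : forall a, a \in Rs -> dot a c != 0.

Definition posr a := a \in Rs /\ 0 < dot a c.
Definition simpl a := posr a /\ ~ (exists b d, posr b /\ posr d /\ a = b + d).

Lemma root_sign a : a \in Rs -> 0 < dot a c \/ dot a c < 0.
Proof. by move/Hc; rewrite neq_lt => /orP[]; [right|left]. Qed.

Lemma posr_ind (P : V -> Prop) :
  (forall a, posr a -> (forall b, posr b -> dot b c < dot a c -> P b) -> P a) ->
  forall a, posr a -> P a.
Proof.
move=> H.
suff: forall k (a : V), (count (fun r => (dot r c < dot a c)%R) Rs < k)%N -> posr a -> P a.
  by move=> Hk a; apply: (Hk _ a (ltnSn _)).
elim=> [//|k IH] a Hk Ha; apply: H => // b Hb Hba; apply: IH => //.
rewrite ltnS in Hk; apply: leq_trans Hk; apply: (count_lt (x := b)); first by move=> x /= Hx; apply: lt_trans Hba.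
- by case: Hb.
- by [].
- by rewrite /= ltxx.
Qed.

Lemma simple_dot_le0 a b : simpl a -> simpl b -> a != b -> dot a b <= 0.
Proof.
move=> [[Ha Hac] Hna] [[Hb Hbc] Hnb] Hne; rewrite leNgt; apply/negP => Hab.
have Hr := root_sub HRs Ha Hb Hab Hne.
case: (root_sign Hr) => Hs.
  by apply: Hna; exists b, (a - b); do !split => //; rewrite addrC subrK.
apply: Hnb; exists a, (b - a); do !split => //.
- by have := root_opp HRs Hr; rewrite opprB.
- by rewrite dotBl; move: Hs; rewrite dotBl; lra.
- by rewrite addrC subrK.
Qed.

Definition zero_off (f : V -> R) := forall g, ~ simpl g -> f g = 0.

Lemma zero_off_simpl f g : zero_off f -> f g != 0 -> simpl g.
Proof. by move=> Hf Hg; apply: NNPP => Hn; move: Hg; rewrite Hf ?eqxx. Qed.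

Lemma simpl_root g : simpl g -> g \in Rs.
Proof. by case=> [[]]. Qed.

Lemma indep f : zero_off f -> \sum_(g <- Rs) f g *: g = 0 -> forall g, f g = 0.
Proof.
move=> Hf Hs.
pose pp g := if 0 < f g then f g else 0.
pose np g := if f g < 0 then - f g else 0.
have Hfg g : f g = pp g - np g.
  rewrite /pp /np; have [H|H|H] := ltgtP (f g) 0.
  - by rewrite sub0r opprK.
  - by rewrite subr0.
  - by rewrite H subrr.
have pp0 g : 0 <= pp g by rewrite /pp; case: ifP => // /ltW.
have np0 g : 0 <= np g by rewrite /np; case: ifP => // H; rewrite oppr_ge0 ltW.
set v := \sum_(g <- Rs) pp g *: g.
have Hv : v = \sum_(g <- Rs) np g *: g.
  apply/eqP; rewrite -subr_eq0 /v -sumrB; apply/eqP; rewrite -[RHS]Hs; apply: eq_bigr => g _.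
  by rewrite -scalerBl -Hfg.
have Hvv : dot v v <= 0.
  rewrite {2}Hv /v dot_suml; apply: sum_le0_seq => g Hg.
  rewrite dotZl dot_sumr mulr_sumr; apply: sum_le0_seq => h Hh.
  rewrite dotZr mulrA.
  have [->|Hpg] := eqVneq (pp g) 0; first by rewrite !mul0r.
  have [->|Hnh] := eqVneq (np h) 0; first by rewrite mulr0 mul0r.
  have Hfg' : 0 < f g by move: Hpg; rewrite /pp; case: ifP => // _; rewrite eqxx.
  have Hfh' : f h < 0 by move: Hnh; rewrite /np; case: ifP => // _; rewrite eqxx.
  apply: mulr_ge0_le0; first by rewrite mulr_ge0.
  apply: simple_dot_le0.
  - by apply: (zero_off_simpl Hf); rewrite gt_eqF.
  - by apply: (zero_off_simpl Hf); rewrite lt_eqF.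
  - by apply/eqP => Eq; move: Hfg' Hfh'; rewrite Eq => /lt_trans H /H; rewrite ltxx.
have v0 : v = 0 by apply/eqP; rewrite -dot_eq0 eq_le Hvv dot_ge0.
have Hnp : forall h, h \in Rs -> 0 <= dot (pp h *: h) c.
  move=> h Hh; rewrite dotZl.
  have [->|Hph] := eqVneq (pp h) 0; first by rewrite mul0r.
  apply: mulr_ge0 => //.
  have Hfh' : 0 < f h by move: Hph; rewrite /pp; case: ifP => // _; rewrite eqxx.
  have [[_ ]] : simpl h by apply: (zero_off_simpl Hf); rewrite gt_eqF.
  by move=> /ltW.
have Hnn : forall h, h \in Rs -> 0 <= dot (np h *: h) c.
  move=> h Hh; rewrite dotZl.
  have [->|Hph] := eqVneq (np h) 0; first by rewrite mul0r.
  apply: mulr_ge0 => //.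
  have Hfh' : f h < 0 by move: Hph; rewrite /np; case: ifP => // _; rewrite eqxx.
  have [[_ ]] : simpl h by apply: (zero_off_simpl Hf); rewrite lt_eqF.
  by move=> /ltW.
have Hp g : g \in Rs -> ~ 0 < f g.
  move=> Hg Hfg'.
  have Hsg : simpl g by apply: (zero_off_simpl Hf); rewrite gt_eqF.
  have : dot v c = 0 by rewrite v0 dot0l.
  rewrite /v dot_suml => H0.
  have := sum_eq0_seq Hnp H0 Hg; rewrite dotZl /pp Hfg' => /eqP.
  by rewrite mulf_eq0 gt_eqF //= gt_eqF //; case: Hsg => [[]].
have Hn g : g \in Rs -> ~ f g < 0.
  move=> Hg Hfg'.
  have Hsg : simpl g by apply: (zero_off_simpl Hf); rewrite lt_eqF.
  have : dot v c = 0 by rewrite v0 dot0l.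
  rewrite Hv dot_suml => H0.
  have := sum_eq0_seq Hnn H0 Hg; rewrite dotZl /np Hfg' => /eqP.
  by rewrite mulf_eq0 oppr_eq0 lt_eqF //= gt_eqF //; case: Hsg => [[]].
move=> g; case: (boolP (g \in Rs)) => Hg.
  by apply/eqP; rewrite eq_le !leNgt; apply/andP; split; apply/negP; [apply: Hp|apply: Hn].
by apply: Hf => Hs'; move: Hg; rewrite simpl_root.
Qed.
End Roots2.


Section Roots3.
Variables (R : realFieldType) (n : nat).
Notation V := 'rV[R]_n.
Variables (Rs : seq V) (c : V).
Hypothesis HRs : reduced_root_system Rs.
Hypothesis Hc : forall a, a \in Rs -> dot a c != 0.
Local Notation posr := (posr Rs c).
Local Notation simpl := (simpl Rs c).
Local Notation zero_off := (zero_off Rs c).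

Lemma uniqRs : uniq Rs. Proof. by case: HRs. Qed.

Lemma posr_decomp a : posr a ->
  exists f, zero_off f /\ (forall g, 0 <= f g) /\ a = \sum_(g <- Rs) f g *: g.
Proof.
elim/posr_ind => {}a Ha IH.
case: (classic (simpl a)) => Hs.
  exists (fun g => (g == a)%:R); split; [|split].
  - by move=> g Hg; case: eqP => // E; rewrite E in Hg.
  - by move=> g; rewrite ler0n.
  - rewrite (bigD1_seq a) //= ?eqxx ?scale1r ?big1 ?addr0 //; last exact: uniqRs.
    + by move=> g /negbTE ->; rewrite scale0r.
    + by case: Ha.
have [b [d [Hb [Hd Ea]]]] : exists b d, posr b /\ posr d /\ a = b + d.
  by apply: NNPP => H; apply: Hs.
have [fb [Zb [Pb Sb]]] : exists f, zero_off f /\ (forall g, 0 <= f g) /\ b = \sum_(g <- Rs) f g *: g.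
  apply: IH => //; rewrite Ea dotDl; case: Hd => _; lra.
have [fd [Zd [Pd Sd]]] : exists f, zero_off f /\ (forall g, 0 <= f g) /\ d = \sum_(g <- Rs) f g *: g.
  apply: IH => //; rewrite Ea dotDl; case: Hb => _; lra.
exists (fun g => fb g + fd g); split; [|split].
- by move=> g Hg; rewrite Zb // Zd // addr0.
- by move=> g; rewrite addr_ge0.
- by rewrite Ea Sb Sd -big_split; apply: eq_bigr => g _; rewrite scalerDl.
Qed.

Definition isco a f := zero_off f /\ a = \sum_(g <- Rs) f g *: g.
Definition co a : V -> R := epsilon (inhabits (fun _ => 0)) (isco a).

Lemma co_spec a f : isco a f -> isco a (co a).
Proof. by move=> H; apply: epsilon_spec; exists f. Qed.

Lemma isco_uniq a f1 f2 : isco a f1 -> isco a f2 -> forall g, f1 g = f2 g.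
Proof.
move=> [Z1 S1] [Z2 S2] g; apply/eqP; rewrite -subr_eq0; apply/eqP.
apply: (indep HRs Hc (f := fun g => f1 g - f2 g)).
  by move=> h Hh; rewrite Z1 // Z2 // subrr.
by under eq_bigr => h _ do rewrite scalerBl; rewrite sumrB -S1 -S2 subrr.
Qed.

Lemma co_eq a f : isco a f -> forall g, co a g = f g.
Proof. by move=> H; apply: isco_uniq (co_spec H) H. Qed.

Lemma root_isco a : a \in Rs -> exists f, isco a f.
Proof.
move=> Ha; case: (root_sign Hc Ha) => Hs.
  by have [f [Z [_ S]]] := posr_decomp (conj Ha Hs); exists f.
have Hp : posr (- a) by split; [exact: root_opp | rewrite dotNl oppr_gt0].
have [f [Z [_ S]]] := posr_decomp Hp.
exists (fun g => - f g); split; first by move=> g Hg; rewrite Z // oppr0.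
rewrite -[a]opprK S -sumrN; apply: eq_bigr => g _; by rewrite scaleNr.
Qed.

Lemma co_isco a : a \in Rs -> isco a (co a).
Proof. by move/root_isco => [f Hf]; apply: co_spec Hf. Qed.

Lemma co_pos a g : posr a -> 0 <= co a g.
Proof. by move=> Ha; have [f [Z [P S]]] := posr_decomp Ha; rewrite (@co_eq a f). Qed.

Lemma co_neg a g : a \in Rs -> dot a c < 0 -> co a g <= 0.
Proof.
move=> Ha Hs.
have Hp : posr (- a) by split; [exact: root_opp | rewrite dotNl oppr_gt0].
have [f [Z [P S]]] := posr_decomp Hp.
rewrite (@co_eq a (fun g => - f g)) ?oppr_le0 //; split; first by move=> h Hh; rewrite Z // oppr0.
rewrite -[a]opprK S -sumrN; apply: eq_bigr => h _; by rewrite scaleNr.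
Qed.

Lemma co_add a b g : a \in Rs -> b \in Rs -> co (a + b) g = co a g + co b g.
Proof.
move=> Ha Hb; have [Za Sa] := co_isco Ha; have [Zb Sb] := co_isco Hb.
apply: (co_eq (f := fun g => co a g + co b g)); split.
  by move=> h Hh; rewrite Za // Zb // addr0.
by rewrite {1}Sa {1}Sb -big_split; apply: eq_bigr => h _; rewrite scalerDl.
Qed.

Lemma co_opp a g : a \in Rs -> co (- a) g = - co a g.
Proof.
move=> Ha; have [Za Sa] := co_isco Ha.
apply: (co_eq (f := fun g => - co a g)); split.
  by move=> h Hh; rewrite Za // oppr0.
by rewrite {1}Sa -sumrN; apply: eq_bigr => h _; rewrite scaleNr.
Qed.

Lemma co_simple a g : simpl a -> co a g = (g == a)%:R.
Proof.
move=> Hs; apply: (co_eq (f := fun g => (g == a)%:R)); split.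
  by move=> h Hh; case: eqP => // E; rewrite E in Hh.
have Ha : a \in Rs by case: Hs => [[]].
rewrite (bigD1_seq a) //= ?eqxx ?scale1r ?big1 ?addr0 //; last exact: uniqRs.
by move=> h /negbTE ->; rewrite scale0r.
Qed.

Lemma co_zero a g : a \in Rs -> ~ simpl g -> co a g = 0.
Proof. by move=> Ha Hg; have [Z _] := co_isco Ha; apply: Z. Qed.

Lemma co_nz_simpl a g : a \in Rs -> co a g != 0 -> simpl g.
Proof. by move=> Ha H; apply: NNPP => Hn; move: H; rewrite co_zero ?eqxx. Qed.

Lemma pos_step r : posr r -> ~ simpl r -> exists d, simpl d /\ posr (r - d).
Proof.
move=> Hr Hns; have Hrr := dot_root_gt0 HRs (proj1 Hr).
have [Z S] := co_isco (proj1 Hr).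
have : 0 < \sum_(g <- Rs) co r g * dot g r.
  by move: Hrr; rewrite {1}S dot_suml; under eq_bigr => g _ do rewrite dotZl.
move/sum_pos_ex => [g [Hg Hp]].
have Hcg : 0 <= co r g := co_pos g Hr.
have Hcg' : co r g != 0 by apply/negP => /eqP E; move: Hp; rewrite E mul0r ltxx.
have Hgr : 0 < dot g r.
  by move: Hp; rewrite pmulr_rgt0 // lt_def Hcg' Hcg.
have Hsg : simpl g := co_nz_simpl (proj1 Hr) Hcg'.
have Hne : r != g by apply/negP => /eqP E; apply: Hns; rewrite E.
have Hrg : 0 < dot r g by rewrite dotC.
have Hsub := root_sub HRs (proj1 Hr) Hg Hrg Hne.
exists g; split => //.
case: (root_sign Hc Hsub) => Hs; first by [].
exfalso; case: Hsg => _; apply; exists r, (g - r); split => //; split; last by rewrite addrC subrK.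
split; first by have := root_opp HRs Hsub; rewrite opprB.
by rewrite dotBl; move: Hs; rewrite dotBl; lra.
Qed.

Lemma isco_comb (k : V -> R) (y : V -> V) (F : V -> V -> R) x :
  x = \sum_(g <- Rs) k g *: y g -> (forall g, g \in Rs -> isco (y g) (F g)) ->
  isco x (fun h => \sum_(g <- Rs) k g * F g h).
Proof.
move=> Ex HF; split.
  move=> h Hh; rewrite big_seq big1 // => g Hg; have [Z _] := HF g Hg.
  by rewrite Z // mulr0.
rewrite Ex; under [RHS]eq_bigr => h _ do rewrite scaler_suml.
rewrite (exchange_big) /= big_seq [RHS]big_seq; apply: eq_bigr => g Hg.
have [_ S] := HF g Hg; rewrite {1}S scaler_sumr; apply: eq_bigr => h _.
by rewrite scalerA.
Qed.
End Roots3.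


Section Main.
Variables (R : realFieldType) (n : nat).
Notation V := 'rV[R]_n.
Variables (Rs : seq V) (c : V).
Hypothesis HRs : reduced_root_system Rs.
Hypothesis Hc : forall a, a \in Rs -> dot a c != 0.
Local Notation posr := (posr Rs c).
Local Notation simpl := (simpl Rs c).
Local Notation co := (co Rs c).

Lemma posr_root a : posr a -> a \in Rs. Proof. by case. Qed.
Lemma simpl_posr a : simpl a -> posr a. Proof. by case. Qed.
Lemma neg_posr a : a \in Rs -> dot a c < 0 -> posr (- a).
Proof. by move=> Ha Hs; split; [exact: root_opp | rewrite dotNl oppr_gt0]. Qed.

Lemma lemA (Q' : V -> Prop) : closed_subset Rs Q' -> (forall a, posr a -> Q' a) ->
  forall b g, Q' b -> b \in Rs -> dot b c < 0 -> co b g != 0 -> Q' (- g).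
Proof.
move=> [HQ1 HQ2] Hp b g Hb Hbr Hbc Hco.
have Hr := neg_posr Hbr Hbc.
suff Hsf : forall r, posr r -> co r g != 0 -> Q' (- r) -> Q' (- g).
  by apply: (Hsf (- b) Hr); [rewrite (co_opp HRs Hc) // oppr_eq0 | rewrite opprK].
clear b Hb Hbr Hbc Hco Hr.
apply: (posr_ind (Rs := Rs) (c := c)) => r Hr IH Hco Hq.
case: (classic (simpl r)) => Hs.
  by move: Hco; rewrite (co_simple HRs Hc) // pnatr_eq0 eqb0 negbK => /eqP ->.
have [d [Hd Hrd]] := pos_step HRs Hc Hr Hs.
have Hdr : d \in Rs by case: Hd => [[]].
have Hq2 : Q' (- r + d).
  apply: HQ2 => //; first by apply: Hp; case: Hd.
  by rewrite addrC -opprB; apply: root_opp; case: Hrd.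
have Ecd : co (r - d) g = co r g - co d g.
  by rewrite (co_add HRs Hc) ?(co_opp HRs Hc) // ?root_opp // posr_root.
have [Hz|Hnz] := eqVneq (co (r - d) g) 0.
  have Egd : g = d.
    move/eqP: Hz; rewrite Ecd subr_eq0 (co_simple HRs Hc (a:=d)) // => /eqP E.
    by move: Hco; rewrite E pnatr_eq0 eqb0 negbK => /eqP.
  subst g.
  have -> : - d = - r + (r - d) by rewrite addrA addNr add0r.
  apply: HQ2 => //; first by apply: Hp.
  by rewrite addrA addNr add0r; apply: root_opp.
apply: (IH (r - d)) => //.
  by rewrite dotBl; case: Hd => [[_ Hdc] _]; lra.
by rewrite opprB addrC.
Qed.

Lemma lemB (Q' : V -> Prop) : closed_subset Rs Q' -> (forall a, posr a -> Q' a) ->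
  forall b, b \in Rs -> dot b c < 0 ->
  (forall g, simpl g -> co b g != 0 -> Q' (- g)) -> Q' b.
Proof.
move=> [HQ1 HQ2] Hp b Hbr Hbc H.
have Hr := neg_posr Hbr Hbc.
rewrite -[b]opprK.
suff Hsf : forall r, posr r -> (forall g, simpl g -> co r g != 0 -> Q' (- g)) -> Q' (- r).
  apply: (Hsf (- b) Hr) => g Hg; rewrite (co_opp HRs Hc) // oppr_eq0; exact: H.
clear b Hbr Hbc H Hr.
apply: (posr_ind (Rs := Rs) (c := c)) => r Hr IH H.
case: (classic (simpl r)) => Hs.
  by apply: (H) => //; rewrite (co_simple HRs Hc) // eqxx oner_eq0.
have [d [Hd Hrd]] := pos_step HRs Hc Hr Hs.
have Hdr : d \in Rs by case: Hd => [[]].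
have Ecd h : co r h = co (r - d) h + co d h.
  by rewrite -(co_add HRs Hc) ?subrK // posr_root.
have Hq1 : Q' (- (r - d)).
  apply: (IH (r - d)) => //.
    by rewrite dotBl; case: Hd => [[_ Hdc] _]; lra.
  move=> g Hg Hn; apply: (H) => //; rewrite Ecd.
  have h1 : 0 < co (r - d) g by rewrite lt_def Hn (co_pos HRs Hc).
  have h2 : 0 <= co d g by apply: (co_pos HRs Hc); apply: simpl_posr.
  by rewrite gt_eqF //; lra.
have Hq2 : Q' (- d).
  apply: (H) => //; rewrite Ecd (co_simple HRs Hc (a:=d)) // eqxx /= mulr1n.
  have h2 : 0 <= co (r - d) d by apply: (co_pos HRs Hc).
  by rewrite gt_eqF //; lra.
have -> : - r = - (r - d) + - d by rewrite opprB addrAC subrr add0r.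
apply: HQ2 => //.
by rewrite opprB addrAC subrr add0r; apply: root_opp; case: Hr.
Qed.
End Main.


Section Main2.
Variables (R : realFieldType) (n : nat).
Notation V := 'rV[R]_n.
Variables (Rs : seq V) (c : V) (Q : V -> Prop) (S : 'M[R]_n).
Hypothesis HRs : reduced_root_system Rs.
Hypothesis Hc : forall a, a \in Rs -> dot a c != 0.
Hypothesis HQ : closed_subset Rs Q.
Hypothesis Hadm : forall a, posr Rs c a -> Q a.
Hypothesis HSS : forall x, act S (act S x) = x.
Hypothesis HSR : forall a, a \in Rs -> act S a \in Rs.
Hypothesis Hfit : forall a, simpl Rs c a -> Q (- a) -> act S a != a -> act S a != - a ->
  dot (act S a) c < 0.
Local Notation posr := (posr Rs c).
Local Notation simpl := (simpl Rs c).
Local Notation co := (co Rs c).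

Definition PhiCc g := simpl g /\ ~ Q (- g).
Definition Phisp g := PhiCc g /\ posr (act S g).
Definition QPc b := posr b \/
  (b \in Rs /\ dot b c < 0 /\ forall g, simpl g -> co b g != 0 -> ~ Phisp g).
Definition QsQ a := Q a \/ img S Q a.

Lemma actD x y : act S (x + y) = act S x + act S y. Proof. exact: mulmxDl. Qed.
Lemma actN x : act S (- x) = - act S x. Proof. exact: mulNmx. Qed.
Lemma act_comb (k : V -> R) :
  act S (\sum_(g <- Rs) k g *: g) = \sum_(g <- Rs) k g *: act S g.
Proof. by rewrite /act mulmx_suml; apply: eq_bigr => g _; rewrite scalemxAl. Qed.

Lemma co_act b e : b \in Rs ->
  co (act S b) e = \sum_(g <- Rs) co b g * co (act S g) e.
Proof.
move=> Hb; have [Z Sb] := co_isco HRs Hc Hb.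
apply: (co_eq HRs Hc (f := fun h => \sum_(g <- Rs) co b g * co (act S g) h)).
apply: (isco_comb (y := act S)).
  by rewrite {1}Sb act_comb.
by move=> g Hg; apply: co_isco => //; apply: HSR.
Qed.

Lemma Qroot a : Q a -> a \in Rs. Proof. by case: HQ => H _; apply: H. Qed.

Lemma coef_le0 g e : simpl g -> Q (- g) -> ~ Q (- e) -> co (act S g) e <= 0.
Proof.
move=> Hg Hqg Hqe.
have Hgr : g \in Rs by case: Hg => [[]].
have Hne : e != g by apply/eqP => E; apply: Hqe; rewrite E.
have [E1|N1] := eqVneq (act S g) g.
  by rewrite E1 (co_simple HRs Hc) // (negbTE Hne).
have [E2|N2] := eqVneq (act S g) (- g).
  by rewrite E2 (co_opp HRs Hc) // (co_simple HRs Hc) // (negbTE Hne) oppr0.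
by apply: (co_neg HRs Hc); [apply: HSR | apply: Hfit].
Qed.

Lemma key g : simpl g -> ~ Q (- g) -> posr (act S g) -> Q (- act S g) -> False.
Proof.
move=> Hg Hqg Hsg Hq.
have Hgr : g \in Rs by case: Hg => [[]].
have Hsr : act S g \in Rs by apply: HSR.
have : co g g = 1 by rewrite (co_simple HRs Hc) // eqxx.
rewrite -{1}(HSS g) co_act //.
have : \sum_(h <- Rs) co (act S g) h * co (act S h) g <= 0.
  apply: sum_le0_seq => h Hh.
  have [->|Hnz] := eqVneq (co (act S g) h) 0; first by rewrite mul0r.
  have Hsh : simpl h by apply: (co_nz_simpl HRs Hc Hsr).
  have Hqh : Q (- h).
    apply: (lemA HRs Hc HQ Hadm (b := - act S g)) => //.
    - by apply: root_opp.
    - by rewrite dotNl oppr_lt0; case: Hsg.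
    - by rewrite (co_opp HRs Hc) // oppr_eq0.
  apply: mulr_ge0_le0; first by apply: (co_pos HRs Hc).
  by apply: coef_le0.
move=> H1 H2; rewrite H2 in H1; by move: H1; rewrite ler10.
Qed.

Lemma QPc_root b : QPc b -> b \in Rs.
Proof. by case=> [[]|[]]. Qed.

Lemma QPc_coef a g : QPc a -> Phisp g -> 0 <= co a g.
Proof.
case=> [Ha|[Ha [Hac H]]] Hg; first by apply: (co_pos HRs Hc).
have Hs : simpl g by case: Hg => [[]].
have [->|Hn] := eqVneq (co a g) 0; first by [].
by exfalso; apply: (H g Hs Hn).
Qed.

Lemma QPc_closed : closed_subset Rs QPc.
Proof.
split; first by move=> a; apply: QPc_root.
move=> a b Ha Hb Hab.
case: (root_sign Hc Hab) => Hs; first by left.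
right; split => //; split => // g Hg Hn Hp.
have Ha' := QPc_root Ha; have Hb' := QPc_root Hb.
have h1 := QPc_coef Ha Hp; have h2 := QPc_coef Hb Hp.
have h3 : co (a + b) g <= 0 by apply: (co_neg HRs Hc).
move: Hn; rewrite (co_add HRs Hc) // => Hn.
have : co a g + co b g == 0 by rewrite eq_le; apply/andP; split; [rewrite -(co_add HRs Hc) | rewrite addr_ge0].
by rewrite (negbTE Hn).
Qed.

Lemma Q_sub_QPc a : Q a -> QPc a.
Proof.
move=> Ha; have Har := Qroot Ha.
case: (root_sign Hc Har) => Hs; first by left.
right; split => //; split => // g Hg Hn [[_ Hq] _]; apply: Hq.
exact: (lemA HRs Hc HQ Hadm Ha Har Hs Hn).
Qed.

Lemma QPc_sub_QsQ a : QPc a -> QsQ a.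
Proof.
case=> [Ha|[Ha [Hac H]]]; first by left; apply: Hadm.
right; exists (act S a); split; last by rewrite HSS.
have Hsr : act S a \in Rs by apply: HSR.
case: (root_sign Hc Hsr) => Hs; first by apply: Hadm.
apply: (lemB HRs Hc HQ Hadm) => // e He Hn.
apply: NNPP => Hqe.
have : 0 <= co (act S a) e.
  rewrite co_act //; apply: sum_ge0_seq => g Hg.
  have [->|Hnz] := eqVneq (co a g) 0; first by rewrite mul0r.
  have Hsg : simpl g by apply: (co_nz_simpl HRs Hc Ha).
  apply: mulr_le0; first by apply: (co_neg HRs Hc).
  case: (classic (Q (- g))) => Hqg; first by apply: coef_le0.
  apply: (co_neg HRs Hc); first by apply: HSR.
  have Hsgr : act S g \in Rs by apply: HSR; case: Hsg => [[]].
  case: (root_sign Hc Hsgr) => // Hp.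
  by exfalso; apply: (H g Hsg Hnz); split => //; split.
have : co (act S a) e <= 0 by apply: (co_neg HRs Hc).
move=> h1 h2; move: Hn; suff -> : co (act S a) e = 0 by rewrite eqxx.
by apply/eqP; rewrite eq_le h1 h2.
Qed.

Lemma QPc_max (Q' : V -> Prop) : closed_subset Rs Q' -> (forall a, Q a -> Q' a) ->
  (forall a, Q' a -> QsQ a) -> forall a, Q' a -> QPc a.
Proof.
move=> HQ' Hsub Hsup a Ha.
have Har : a \in Rs by case: HQ' => H _; apply: H.
case: (root_sign Hc Har) => Hs; first by left.
right; split => //; split => // g Hg Hn [[_ Hqg] Hpg].
have Hq' : Q' (- g).
  apply: (lemA HRs Hc HQ' _ Ha Har Hs Hn) => b Hb; apply: Hsub; exact: Hadm.
case: (Hsup _ Hq') => [//|[b [Hb Eb]]].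
apply: (key Hg Hqg Hpg).
have -> : - act S g = b by rewrite -actN Eb HSS.
exact: Hb.
Qed.

Definition condb := forall g, PhiCc g -> posr (act S g).
Definition condc := forall g, PhiCc g -> Q (act S g) /\ ~ Q (- act S g).

Lemma b_iff_c : condb <-> condc.
Proof.
split=> H g Hg.
  have Hp := H g Hg; split; first by apply: Hadm.
  by move=> Hq; apply: (key (proj1 Hg) (proj2 Hg) Hp Hq).
have [Hq Hnq] := H g Hg.
have Hr := Qroot Hq.
case: (root_sign Hc Hr) => // Hs.
by exfalso; apply: Hnq; apply: Hadm; apply: neg_posr.
Qed.

Lemma QPc_sub_Q : condb -> forall a, QPc a -> Q a.
Proof.
move=> Hb a [Ha|[Ha [Hac H]]]; first by apply: Hadm.
apply: (lemB HRs Hc HQ Hadm) => // g Hg Hn.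
apply: NNPP => Hq; apply: (H g Hg Hn); split; first by split.
by apply: Hb.
Qed.
End Main2.


Section Trans.
Variables (R : realFieldType) (n : nat).
Notation V := 'rV[R]_n.
Variables (Rs : seq V) (c : V) (C : V -> Prop).
Hypothesis HRs : reduced_root_system Rs.
Hypothesis Hc : forall a, a \in Rs -> dot a c != 0.
Hypothesis HC : forall x, C x <-> (forall a, a \in Rs -> dot a x != 0 /\
                                     ((0 < dot a x) = (0 < dot a c))).
Local Notation posr := (posr Rs c).
Local Notation simpl := (simpl Rs c).
Local Notation co := (co Rs c).

Lemma Cc : C c.
Proof. by apply/HC => a Ha; split => //; apply: Hc. Qed.

Lemma posC a : pos_roots Rs C a <-> posr a.
Proof.
split=> [[Ha H]|[Ha H]]; first by split => //; apply: H; apply: Cc.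
split => // x /HC Hx; have [_ ->] := Hx a Ha; exact: H.
Qed.

Lemma negC a : neg_roots Rs C a <-> a \in Rs /\ dot a c < 0.
Proof.
split=> [[Ha H]|[Ha H]]; first by split => //; apply: H; apply: Cc.
split => // x /HC Hx; have [Hn E] := Hx a Ha.
move: E; rewrite (lt_gtF H) => E.
by move: Hn; rewrite neq_lt E orbF.
Qed.

Lemma simpC a : simple_roots Rs C a <-> simpl a.
Proof.
split=> [[Ha H]|[Ha H]]; split; try by apply/posC.
- move=> [b [d [Hb [Hd E]]]]; apply: H; exists b, d.
  by split; [apply/posC|split; [apply/posC|]].
- move=> [b [d [Hb [Hd E]]]]; apply: H; exists b, d.
  by split; [apply/posC|split; [apply/posC|]].
Qed.

Lemma suppC a b : a \in Rs -> (supp Rs C a b <-> simpl b /\ co a b != 0).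
Proof.
move=> Ha; split.
  move=> [Hb [k [Hk [Ea Hkb]]]]; split; first by apply/simpC.
  rewrite (co_eq HRs Hc (f := k)) //; split => // g Hg; apply: Hk => /simpC; exact: Hg.
move=> [Hb Hn]; split; first by apply/simpC.
have [Z Sa] := co_isco HRs Hc Ha.
exists (co a); split => //; move=> g Hg; apply: Z => /simpC; exact: Hg.
Qed.
End Trans.


Theorem theorem4p30 (R : realFieldType) (n : nat) (Rs : seq 'rV[R]_n)
    (Q : 'rV[R]_n -> Prop) (S : 'M[R]_n) (C : 'rV[R]_n -> Prop) :
  reduced_root_system Rs -> parabolic Rs Q -> root_involution Rs S ->
  weyl_chamber Rs C -> V_fit Rs Q S C ->
  let Phi := PhiC Rs Q C in
  let Phi_sp := fun a => Phi a /\ pos_roots Rs C (act S a) in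
  let QsQ := fun a => Q a \/ img S Q a in
  ((closed_subset Rs (QPhi Rs C Phi_sp) /\ subsetV Q (QPhi Rs C Phi_sp) /\
    subsetV (QPhi Rs C Phi_sp) QsQ) /\
   (forall Q' : 'rV[R]_n -> Prop, closed_subset Rs Q' -> subsetV Q Q' ->
      subsetV Q' QsQ -> subsetV Q' (QPhi Rs C Phi_sp))) /\
  (levi_nondegenerate Rs Q S <-> (forall a, Phi a -> pos_roots Rs C (act S a))) /\
  ((forall a, Phi a -> pos_roots Rs C (act S a)) <->
   (forall a, Phi a -> Qn Q (act S a))).
Proof.
move=> HRs Hpar Hinv HW [Hadm0 Hfit0] Phi Phi_sp QsQ.
have [c [Hc HC]] := HW.
have HQ := proj1 Hpar.
have Hadm : forall a, posr Rs c a -> Q a.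
  by move=> a Ha; apply: Hadm0; apply/(posC Hc HC).
have [HSS1 _ HSR _] := Hinv.
have HSS : forall x, act S (act S x) = x.
  by move=> x; rewrite /act -mulmxA HSS1 mulmx1.
have Hfit : forall a, simpl Rs c a -> Q (- a) -> act S a != a -> act S a != - a ->
    dot (act S a) c < 0.
  move=> a Ha Hq N1 N2.
  have Har : a \in Rs by case: Ha => [[]].
  have : neg_roots Rs C (act S a).
    apply: Hfit0; first by apply/(simpC Hc HC).
      by move=> [_ [_ Hn]]; apply: Hn.
    by split => //; split; apply/eqP.
  by move/(negC Hc HC) => [].
have PhiE : forall a, Phi a <-> PhiCc Rs c Q a.
  move=> a; split.
    by move=> [Ha [_ Hn]]; split => //; apply/(simpC Hc HC).
  move=> [Ha Hn]; split; first by apply/(simpC Hc HC).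
  by split => //; apply: Hadm; case: Ha.
have PspE : forall a, Phi_sp a <-> Phisp Rs c Q S a.
  move=> a; split.
    by move=> [H1 H2]; split; [apply/PhiE | apply/(posC Hc HC)].
  by move=> [H1 H2]; split; [apply/PhiE | apply/(posC Hc HC)].
have QPE : forall a, QPhi Rs C Phi_sp a <-> QPc Rs c Q S a.
  move=> a; split.
    case=> [Ha|[Ha H]]; first by left; apply/(posC Hc HC).
    move/(negC Hc HC): Ha => [Ha Hac].
    right; split => //; split => // g Hg Hn Hp; apply: (H g).
      by apply/(suppC HRs Hc HC g Ha).
    by apply/PspE.
  case=> [Ha|[Ha [Hac H]]]; first by left; apply/(posC Hc HC).
  right; split; first by apply/(negC Hc HC).
  move=> b /(suppC HRs Hc HC b Ha) [Hb Hn] /PspE; exact: H.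
have bE : (forall a, Phi a -> pos_roots Rs C (act S a)) <-> condb Rs c Q S.
  split=> H a Ha.
    by apply/(posC Hc HC); apply: H; apply/PhiE.
  by apply/(posC Hc HC); apply: H; apply/PhiE.
have cE : (forall a, Phi a -> Qn Q (act S a)) <-> condc Rs c Q S.
  split=> H a Ha.
    by apply: H; apply/PhiE.
  by apply: H; apply/PhiE.
have Hcl := @QPc_closed R n Rs c Q S HRs Hc.
split; [split; [split; [|split]|] | split].
- split; first by move=> a /QPE; apply: QPc_root.
  move=> a b /QPE Ha /QPE Hb Hab; apply/QPE.
  by case: Hcl => _ H; apply: H.
- by move=> a Ha; apply/QPE; apply: (Q_sub_QPc S HRs Hc HQ Hadm).
- by move=> a /QPE; apply: (QPc_sub_QsQ HRs Hc HQ Hadm HSS HSR Hfit).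
- move=> Q' HQ' Hsub Hsup a Ha; apply/QPE.
  exact: (QPc_max HRs Hc HQ Hadm HSS HSR Hfit HQ' Hsub Hsup).
- rewrite bE; split.
    move=> Hl; apply: NNPP => Hnb; apply: Hl.
    have [g [Hg Hng]] : exists g, PhiCc Rs c Q g /\ ~ posr Rs c (act S g).
      apply: NNPP => H; apply: Hnb => g Hg; apply: NNPP => Hp; apply: H; by exists g.
    have Hgr : g \in Rs by case: Hg => [[[]]].
    exists (QPc Rs c Q S); split.
    + split => // a Ha; case: (root_sign Hc Ha) => Hs; first by left; left.
      by right; left; apply: neg_posr.
    + by move=> a; apply: (Q_sub_QPc S HRs Hc HQ Hadm).
    + exists (- g); split; last by case: Hg.
      right; split; first exact: root_opp.
      split; first by rewrite dotNl oppr_lt0; case: Hg => [[[_ ]]].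
      have Hsg : simpl Rs c g := proj1 Hg.
      move=> h Hh; rewrite (co_opp HRs Hc) // oppr_eq0 (co_simple HRs Hc (a:=g)) //.
      rewrite pnatr_eq0 eqb0 negbK => /eqP -> [_ Hp]; exact: Hng Hp.
    + by move=> a; apply: (QPc_sub_QsQ HRs Hc HQ Hadm HSS HSR Hfit).
  move=> Hb [Q' [[HQ' _] Hsub [a [Hqa Hnqa]] Hsup]].
  apply: Hnqa; apply: (QPc_sub_Q HRs Hc HQ Hadm Hb).
  exact: (QPc_max HRs Hc HQ Hadm HSS HSR Hfit HQ' Hsub Hsup).
- rewrite bE; split.
    move=> H; have := proj1 (b_iff_c HRs Hc HQ Hadm HSS HSR Hfit) H.
    by move=> H' a /PhiE Ha; have [h1 h2] := H' a Ha; split.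
  move=> H; apply: (proj2 (b_iff_c HRs Hc HQ Hadm HSS HSR Hfit)).
  by move=> a Ha; have [h1 h2] := H a (proj2 (PhiE a) Ha); split.
Qed.
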